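(* For any $A>0$, $\epsilon>0$ and every $N$ (sufficiently large), there is a $z=z(N,A,\epsilon)$ with $\log\log z>(1-\epsilon)\log\log N$ and $z<N^{\epsilon}$ such that, for all but $O_{A,\epsilon}(N(\log N)^{-A})$ integers $n$ between $1$ and $N$: (1) $\prod_{p\mid n,\ p\leq z} p^{v_p(n)} < N^{\epsilon}$; (2) $\omega(n) - \#\{p \text{ prime}: p\mid n,\ p\leq z\} < \epsilon\log\log z$.
   Context: $v_p(n)$ is the exponent of the prime $p$ in $n$; $\omega(n)$ is the number of distinct prime divisors of $n$; $p$ ranges over primes. *)

(* Defs.v *)
From Stdlib Require Import Reals.
From mathcomp Require Import all_boot.

Definition Rltb (x y : R) : bool := if Rlt_dec x y then true else false.
Definition Rleb (x y : R) : bool := if Rle_dec x y then true else false.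

Definition smooth_part (z : R) (n : nat) : nat :=
  \prod_(p <- primes n | Rleb (INR p) z) p ^ logn p n.

Definition omega (n : nat) : nat := size (primes n).

Definition omega_le (z : R) (n : nat) : nat :=
  size [seq p <- primes n | Rleb (INR p) z].

Definition good (N : nat) (eps z : R) (n : nat) : bool :=
  Rltb (INR (smooth_part z n)) (Rpower (INR N) eps) &&
  Rltb (Rminus (INR (omega n)) (INR (omega_le z n))) (Rmult eps (ln (ln z))).

(* Main.v *)
Require Import Defs.
From Stdlib Require Import Reals Lra Lia ZArith.
From mathcomp Require Import all_boot.
Local Open Scope R_scope.

Lemma ln_le' x y : 0 < x -> x <= y -> ln x <= ln y.
Proof. move=> hx [h|<-]; [left; exact: ln_increasing| lra]. Qed.
Lemma exp_le' x y : x <= y -> exp x <= exp y.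
Proof. move=> [h|<-]; [left; exact: exp_increasing| lra]. Qed.
Lemma ln_le_inv' x y : 0 < x -> 0 < y -> ln x <= ln y -> x <= y.
Proof. move=> hx hy [h|h]; first by left; exact: ln_lt_inv.
right; exact: ln_inv. Qed.
Lemma ln_pos' x : 1 < x -> 0 < ln x.
Proof. move=> h; rewrite -ln_1; apply: ln_increasing; lra. Qed.
Lemma ln_nonneg' x : 1 <= x -> 0 <= ln x.
Proof. move=> h; rewrite -ln_1; apply: ln_le'; lra. Qed.
Lemma ln_le_sub1 x : 0 < x -> ln x <= x - 1.
Proof. move=> hx. have := exp_ineq1_le (ln x). rewrite exp_ln //. lra. Qed.

Lemma in_tail {x y : nat} {s} : y \in s -> y \in x :: s.
Proof. by move=> h; rewrite in_cons h orbT. Qed.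

Definition sumL (f : nat -> R) (s : seq nat) : R := foldr (fun x a => f x + a) 0 s.
Definition prodL (f : nat -> R) (s : seq nat) : R := foldr (fun x a => f x * a) 1 s.
Arguments sumL : simpl never.
Arguments prodL : simpl never.

Lemma sumL_cat f s t : sumL f (s ++ t) = sumL f s + sumL f t.
Proof. elim: s => [|x s IH] /=; rewrite /sumL /= -?/(sumL f _) ?IH; lra. Qed.
Lemma sumL_cons f x s : sumL f (x :: s) = f x + sumL f s.
Proof. by []. Qed.
Lemma sumL_nil f : sumL f [::] = 0.
Proof. by []. Qed.
Lemma sumL_le f g s : (forall x, x \in s -> f x <= g x) -> sumL f s <= sumL g s.
Proof. elim: s => [|x s IH] h; rewrite ?sumL_nil ?sumL_cons; first lra.
have := h x (mem_head _ _). have := IH (fun y hy => h y (in_tail hy)). lra. Qed.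
Lemma sumL_ext f g s : (forall x, x \in s -> f x = g x) -> sumL f s = sumL g s.
Proof. move=> h; apply: Rle_antisym; apply: sumL_le => x hx; rewrite (h x hx); lra. Qed.
Lemma sumL_ge0 f s : (forall x, x \in s -> 0 <= f x) -> 0 <= sumL f s.
Proof. move=> h; have := sumL_le (fun _ => 0) f s h.
have -> : sumL (fun _ => 0) s = 0 by elim: s {h} => //= x s IH; rewrite /sumL /= -/(sumL _ _) IH; lra.
done. Qed.
Lemma sumL_plus f g s : sumL (fun x => f x + g x) s = sumL f s + sumL g s.
Proof. elim: s => [|x s IH]; rewrite ?sumL_nil ?sumL_cons ?IH; lra. Qed.
Lemma sumL_scal c f s : sumL (fun x => c * f x) s = c * sumL f s.
Proof. elim: s => [|x s IH]; rewrite ?sumL_nil ?sumL_cons ?IH; lra. Qed.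
Lemma sumL_swap (F : nat -> nat -> R) s t :
  sumL (fun a => sumL (F a) t) s = sumL (fun b => sumL (fun a => F a b) s) t.
Proof. elim: s => [|x s IH].
- rewrite sumL_nil. symmetry; elim: t => [|y t IHt]; rewrite ?sumL_nil ?sumL_cons ?IHt ?sumL_nil //; lra.
- rewrite sumL_cons IH -sumL_plus. by apply: sumL_ext => y _; rewrite sumL_cons. Qed.
Lemma sumL_filter (P : pred nat) f s :
  sumL f (filter P s) = sumL (fun x => if P x then f x else 0) s.
Proof. elim: s => [|x s IH] //=. rewrite sumL_cons -IH. case: (P x) => /=; rewrite ?sumL_cons; lra. Qed.
Lemma sumL_split (P : pred nat) f s :
  sumL f s = sumL f (filter P s) + sumL f (filter (predC P) s).
Proof. elim: s => [|x s IH] /=; first by rewrite /sumL /=; lra.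
rewrite sumL_cons IH; case: (P x) => /=; rewrite ?sumL_cons; lra. Qed.
Lemma sumL_count (P : pred nat) s : INR (count P s) = sumL (fun x => if P x then 1 else 0) s.
Proof. elim: s => [|x s IH] //=. rewrite sumL_cons -IH plus_INR. case: (P x) => /=; lra. Qed.
Lemma sumL_const c s : sumL (fun _ => c) s = INR (size s) * c.
Proof. elim: s => [|x s IH]; rewrite ?sumL_nil ?sumL_cons ?IH; first by rewrite /=; lra.
change (size (x :: s)) with (S (size s)); rewrite S_INR; lra. Qed.

Lemma prodL_cons f x s : prodL f (x :: s) = f x * prodL f s.
Proof. by []. Qed.
Lemma prodL_nil f : prodL f [::] = 1.
Proof. by []. Qed.
Lemma prodL_ge0 f s : (forall x, x \in s -> 0 <= f x) -> 0 <= prodL f s.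
Proof. elim: s => [|x s IH] h; rewrite ?prodL_nil ?prodL_cons; first lra.
apply: Rmult_le_pos; [exact: h (mem_head _ _)| exact: IH (fun y hy => h y (in_tail hy))]. Qed.
Lemma prodL_exp f s : (forall x, x \in s -> 0 <= f x) ->
  prodL (fun x => 1 + f x) s <= exp (sumL f s).
Proof. elim: s => [|x s IH] h; rewrite ?prodL_nil ?prodL_cons ?sumL_nil ?sumL_cons.
- rewrite exp_0; lra.
- rewrite exp_plus. have h1 := h x (mem_head _ _).
  have h2 := IH (fun y hy => h y (in_tail hy)).
  have h3 : 0 <= prodL (fun x => 1 + f x) s by apply: prodL_ge0 => y hy; have := h y (in_tail hy); lra.
  have h4 := exp_ineq1_le (f x).
  apply: Rmult_le_compat; lra. Qed.

Lemma iotaS1 N : iota 1 N.+1 = iota 1 N ++ [:: N.+1].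
Proof. by rewrite -[X in iota 1 X]addn1 iotaD add1n. Qed.

Lemma sum_mult d f N : (0 < d)%N ->
  sumL (fun n => if d %| n then f n else 0) (iota 1 N) =
  sumL (fun m => f (d * m)%N) (iota 1 (N %/ d)).
Proof.
move=> d0; elim: N => [|N IH]; first by rewrite div0n.
rewrite iotaS1 sumL_cat IH divnS //.
case: (boolP (d %| N.+1)) => hd.
- have -> : (true + N %/ d = (N %/ d).+1)%N by [].
  have e : (d * (N %/ d).+1 = N.+1)%N.
    by rewrite -[(N %/ d).+1]/(true + N %/ d)%N -hd -divnS // mulnC divnK.
  rewrite iotaS1 sumL_cat !sumL_cons !sumL_nil hd e. lra.
- have -> : (false + N %/ d = (N %/ d))%N by [].
  rewrite sumL_cons sumL_nil (negbTE hd); lra.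
Qed.

Section Euler.
Variable sg : R.
Hypothesis sg0 : 0 < sg.
Hypothesis sg1 : sg < 1.

Definition tt (p : nat) := Rpower (INR p) sg.
Definition gP (P : seq nat) (n : nat) := prodL (fun p => tt p ^ (logn p n)) P.
Definition hh (p : nat) := (tt p - 1) / (INR p - tt p).
Definition cP (P : seq nat) := prodL (fun p => 1 + hh p) P.

Lemma INR_prime_ge2 {p} : prime p -> 2 <= INR p.
Proof. move=> pp; have := prime_gt1 pp => h. apply: (le_INR 2); apply/leP; exact h. Qed.

Lemma tt_ge1 {p} : prime p -> 1 <= tt p.
Proof. move=> pp; have := INR_prime_ge2 pp => h.
rewrite /tt -(Rpower_O (INR p)); last lra. apply: Rle_Rpower; lra. Qed.

Lemma tt_lt {p} : prime p -> tt p < INR p.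
Proof. move=> pp; have := INR_prime_ge2 pp => h.
rewrite /tt -{2}(Rpower_1 (INR p)); last lra. apply: Rpower_lt; lra. Qed.

Lemma hh_ge0 {p} : prime p -> 0 <= hh p.
Proof. move=> pp; have := tt_ge1 pp; have := tt_lt pp => h1 h2.
rewrite /hh; apply: Rmult_le_pos; first lra. left; apply: Rinv_0_lt_compat; lra. Qed.

Lemma cP_ge1 P : all prime P -> 1 <= cP P.
Proof. elim: P => [|p P IH] /=; first by rewrite /cP prodL_nil; lra.
move=> /andP [pp hP]. rewrite /cP prodL_cons -/(cP P).
have := IH hP; have := hh_ge0 pp => h1 h2.
have : 1 * 1 <= (1 + hh p) * cP P by apply: Rmult_le_compat; lra. lra. Qed.

Lemma telesc (x : R) v M : (v <= M)%N ->
  sumL (fun a => if (a <= v)%N then x ^ a - x ^ a.-1 else 0) (iota 1 M) = x ^ v - 1.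
Proof.
move=> hvM.
suff: sumL (fun a => if (a <= v)%N then x ^ a - x ^ a.-1 else 0) (iota 1 M) = x ^ (minn v M) - 1.
  by rewrite (minn_idPl hvM).
elim: M {hvM} => [|M IH]; first by rewrite minn0 sumL_nil /=; lra.
rewrite iotaS1 sumL_cat IH sumL_cons sumL_nil.
case: (leqP M.+1 v) => h.
- have e1 : minn v M.+1 = M.+1 by apply/minn_idPr.
  have e2 : minn v M = M by apply/minn_idPr; exact: ltnW.
  rewrite e2 /=. lra.
- have e1 : minn v M.+1 = v by apply/minn_idPl; exact: ltnW.
  have e2 : minn v M = v by apply/minn_idPl; rewrite -ltnS.
  have h' : (M.+1 <= v)%N = false by apply/negbTE; rewrite -ltnNge.
  rewrite e2; lra.
Qed.

Lemma geom (r : R) M : 0 <= r < 1 ->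
  sumL (fun a => r ^ a.-1) (iota 1 M) <= / (1 - r).
Proof.
move=> hr.
have e : sumL (fun a => r ^ a.-1) (iota 1 M) * (1 - r) = 1 - r ^ M.
  elim: M => [|M IH]; first by rewrite sumL_nil /=; lra.
  rewrite iotaS1 sumL_cat sumL_cons sumL_nil Rmult_plus_distr_r IH /=. lra.
have hp : 0 <= r ^ M by apply: pow_le; lra.
have h1 : 0 < 1 - r by lra.
apply: (Rmult_le_reg_r (1 - r)) => //. rewrite e Rinv_l; lra.
Qed.


Lemma gP_mul P q a m : prime q -> q \notin P -> all prime P -> (0 < m)%N ->
  gP P (q ^ a * m) = gP P m.
Proof.
move=> pq; elim: P => [|p P IH] //= hq /andP [pp hP] m0.
rewrite /gP !prodL_cons -!/(gP P _).
rewrite in_cons negb_or in hq. case/andP: hq => hpq hq.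
have qa0 : (0 < q ^ a)%N by rewrite expn_gt0 prime_gt0.
rewrite IH // (lognM _ qa0 m0) lognX logn_prime //.
by rewrite eq_sym (negbTE hpq) muln0 add0n.
Qed.

Lemma INR_expn q a : INR (q ^ a)%N = INR q ^ a.
Proof. elim: a => [|a IH]; first by rewrite expn0.
by rewrite expnS mult_INR IH. Qed.

Lemma logn_lt n q : prime q -> (0 < n)%N -> (logn q n < n)%N.
Proof.
move=> pq n0. apply: (leq_trans (ltn_expl _ (prime_gt1 pq))).
apply: dvdn_leq => //. exact: pfactor_dvdnn.
Qed.

Lemma div_INR M d : (0 < d)%N -> INR (M %/ d) <= INR M / INR d.
Proof.
move=> d0. have hd : 0 < INR d by apply: (lt_INR 0); apply/ltP.
apply: (Rmult_le_reg_r (INR d)) => //. rewrite /Rdiv Rmult_assoc Rinv_l; last lra.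
rewrite Rmult_1_r -mult_INR. apply: le_INR; apply/leP; exact: leq_trunc_div.
Qed.

Lemma euler P : uniq P -> all prime P -> forall M, sumL (gP P) (iota 1 M) <= INR M * cP P.
Proof.
elim: P => [|q P IH].
  move=> _ _ M. rewrite /cP prodL_nil.
  have -> : sumL (gP [::]) (iota 1 M) = sumL (fun _ => 1) (iota 1 M) by [].
  rewrite sumL_const size_iota. lra.
move=> /andP [hq hu] /andP [pq hP] M.
pose t := tt q.
have t1 : 1 <= t := tt_ge1 pq. have tq : t < INR q := tt_lt pq.
have q2 := INR_prime_ge2 pq.
have cP1 := cP_ge1 P hP.
pose d a := t ^ a - t ^ a.-1.
have step1 : forall n, n \in iota 1 M -> gP (q :: P) n =
   gP P n + sumL (fun a => d a * (if q ^ a %| n then gP P n else 0)) (iota 1 M).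
  move=> n; rewrite mem_iota => /andP [n1 nM].
  have vM : (logn q n <= M)%N.
    rewrite add1n ltnS in nM. exact: ltnW (leq_trans (logn_lt _ _ pq n1) nM).
  rewrite /gP prodL_cons -!/(gP P _) -/t.
  have -> : sumL (fun a => d a * (if q ^ a %| n then gP P n else 0)) (iota 1 M) =
            gP P n * sumL (fun a => if (a <= logn q n)%N then t ^ a - t ^ a.-1 else 0) (iota 1 M).
    rewrite -sumL_scal. apply: sumL_ext => a _. rewrite pfactor_dvdn //.
    case: (a <= logn q n)%N; rewrite /d; lra.
  rewrite telesc //. lra.
rewrite (sumL_ext _ _ _ step1) sumL_plus.
rewrite (sumL_swap (fun n a => d a * (if q ^ a %| n then gP P n else 0))).
have step2 : forall a, a \in iota 1 M ->
   sumL (fun n => d a * (if q ^ a %| n then gP P n else 0)) (iota 1 M) <=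
   d a * (INR M / INR q ^ a) * cP P.
  move=> a _.
  have da : 0 <= d a.
    rewrite /d; case: a => [|a] /=; first lra.
    have h1 : 1 <= t ^ a by apply: pow_R1_Rle.
    replace (t * t ^ a - t ^ a) with ((t - 1) * t ^ a) by ring.
    apply: Rmult_le_pos; lra.
  rewrite sumL_scal sum_mult ?expn_gt0 ?prime_gt0 //.
  rewrite (sumL_ext _ (gP P)); last first.
    move=> m; rewrite mem_iota => /andP [m1 _]; exact: gP_mul.
  rewrite Rmult_assoc. apply: Rmult_le_compat_l => //.
  apply: (Rle_trans _ _ _ (IH hu hP _)). apply: Rmult_le_compat_r; first lra.
  have qa0 : (0 < q ^ a)%N by rewrite expn_gt0 prime_gt0.
  by rewrite -INR_expn; apply: div_INR.
apply: (Rle_trans _ _ _ (Rplus_le_compat_l _ _ _ (sumL_le _ _ _ step2))).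
have e3 : forall a, a \in iota 1 M ->
   d a * (INR M / INR q ^ a) * cP P = (INR M * cP P * ((t - 1) / INR q)) * (t / INR q) ^ a.-1.
  move=> a; rewrite mem_iota => /andP [a1 _].
  case: a a1 => [|a] // _ /=. rewrite /d /= Rpow_mult_distr pow_inv. field.
  split; [apply: pow_nonzero | ]; lra.
rewrite (sumL_ext _ _ _ e3) sumL_scal.
have hr : 0 <= t / INR q < 1.
  split; first by apply: Rmult_le_pos; [lra| left; apply: Rinv_0_lt_compat; lra].
  apply: (Rmult_lt_reg_r (INR q)); first lra.
  rewrite /Rdiv Rmult_assoc Rinv_l; lra.
have g := geom _ M hr.
have hc : 0 <= INR M * cP P * ((t - 1) / INR q).
  apply: Rmult_le_pos; [apply: Rmult_le_pos; [apply: pos_INR| lra] |].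
  apply: Rmult_le_pos; [lra| left; apply: Rinv_0_lt_compat; lra].
have := Rmult_le_compat_l _ _ _ hc g.
have -> : INR M * cP P * ((t - 1) / INR q) * / (1 - t / INR q) = INR M * cP P * hh q.
  rewrite /hh -/t. field. lra.
rewrite /cP prodL_cons -/(cP P). move=> h. have h2 := IH hu hP M.
replace (INR M * ((1 + hh q) * cP P)) with (INR M * cP P + INR M * cP P * hh q) by ring. lra.
Qed.

End Euler.

Definition prodN (s : seq nat) : nat := foldr muln 1%N s.

Lemma prodN_gt0 s : all prime s -> (0 < prodN s)%N.
Proof. elim: s => [|p s IH] //= /andP [pp hs]. by rewrite muln_gt0 prime_gt0 // IH. Qed.

Lemma prime_ndvd_prodN p s : prime p -> all prime s -> p \notin s -> ~~ (p %| prodN s).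
Proof.
move=> pp; elim: s => [|q s IH] /=; first by move=> _ _; rewrite dvdn1; apply/eqP => e; rewrite e in pp.
move=> /andP [pq hs]. rewrite in_cons negb_or => /andP [hpq hps].
by rewrite Euclid_dvdM // dvdn_prime2 // (negbTE hpq) IH.
Qed.

Lemma prodN_dvd s c : uniq s -> all prime s -> all (fun p => p %| c) s -> prodN s %| c.
Proof.
elim: s => [|p s IH] /=; first by rewrite dvd1n.
move=> /andP [hps hu] /andP [pp hP] /andP [hpc hc].
rewrite Gauss_dvd ?hpc ?IH //. rewrite prime_coprime //. exact: prime_ndvd_prodN.
Qed.

Lemma sumL_ln s : all prime s -> sumL (fun p => ln (INR p)) s = ln (INR (prodN s)).
Proof.
elim: s => [|p s IH] /=; first by rewrite sumL_nil /= ln_1.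
move=> /andP [pp hs]. rewrite sumL_cons IH // mult_INR ln_mult //.
- apply: (lt_INR 0); apply/ltP; exact: prime_gt0.
- apply: (lt_INR 0); apply/ltP; exact: prodN_gt0.
Qed.

Lemma prime_ndvd_fact p m : prime p -> (m < p)%N -> ~~ (p %| m`!).
Proof.
move=> pp; elim: m => [|m IH] hm; first by rewrite fact0 dvdn1; apply/eqP => e; rewrite e in pp.
rewrite factS Euclid_dvdM // (negbTE (IH (ltnW hm))) orbF.
apply/negP => /(dvdn_leq (ltn0Sn m)) h. by move: (leq_ltn_trans h hm); rewrite ltnn.
Qed.

Lemma prime_dvd_bin p m : prime p -> (m < p <= m.*2)%N -> p %| 'C(m.*2, m).
Proof.
move=> pp /andP [h1 h2].
have hm : (m <= m.*2)%N by rewrite -addnn leq_addr.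
have e := bin_fact hm.
have hp : p %| (m.*2)`! by apply: dvdn_fact; rewrite prime_gt0.
rewrite -e in hp. rewrite Gauss_dvdl // in hp.
rewrite prime_coprime // Euclid_dvdM // negb_or.
have -> : (m.*2 - m = m)%N by rewrite -addnn addnK.
by rewrite prime_ndvd_fact.
Qed.

Lemma bin_le4 m : ('C(m.*2, m) <= 4 ^ m)%N.
Proof.
have e := expnDn 1 1 (m.*2).
have hm : (m < (m.*2).+1)%N by rewrite ltnS -addnn leq_addr.
rewrite (bigD1 (Ordinal hm)) //= !exp1n !muln1 in e.
have -> : (4 ^ m = 2 ^ m.*2)%N by rewrite -mul2n expnM.
rewrite e. exact: leq_addr.
Qed.

Lemma block_ln m s : uniq s -> all prime s -> all (fun p => m < p <= m.*2)%N s ->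
  sumL (fun p => ln (INR p)) s <= INR m * (2 * ln 2).
Proof.
move=> hu hp hb. rewrite sumL_ln //.
have hd : prodN s %| 'C(m.*2, m).
  apply: prodN_dvd => //. apply/allP => p hps.
  apply: prime_dvd_bin; [exact: (allP hp) | exact: (allP hb)].
have hC : (0 < 'C(m.*2, m))%N by rewrite bin_gt0 -addnn leq_addr.
have h1 := dvdn_leq hC hd. have h2 := leq_trans h1 (bin_le4 m).
have p0 : 0 < INR (prodN s) by apply: (lt_INR 0); apply/ltP; exact: prodN_gt0.
apply: (Rle_trans _ (ln (INR (4 ^ m)%N))).
  apply: ln_le' => //; apply: le_INR; apply/leP; exact: h2.
have e4 : INR 4 = 2 * 2 by rewrite /=; lra.
rewrite INR_expn e4 -Rpower_pow; last lra. rewrite ln_Rpower.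
rewrite ln_mult; lra.
Qed.

Lemma all_filter_sub (Q P : pred nat) s : all Q s -> all Q (filter P s).
Proof. move=> /allP h; apply/allP => x; rewrite mem_filter => /andP [_ hx]; exact: h. Qed.

Lemma dyadic J s : uniq s -> all prime s -> all (fun p => p <= 2 ^ J)%N s ->
  sumL (fun p => ln (INR p) / INR p) s <= INR J * (2 * ln 2).
Proof.
elim: J s => [|J IH] s hu hp hb.
  rewrite /= Rmult_0_l. apply: (Rle_trans _ (sumL (fun _ => 0) s)).
    apply: sumL_le => x hx. exfalso.
    have := prime_gt1 (allP hp x hx). have := allP hb x hx. rewrite expn0.
    by move=> h1 h2; move: (leq_ltn_trans h1 h2); rewrite ltnn.
  rewrite sumL_const; lra.
rewrite (sumL_split (fun p => p <= 2 ^ J)%N).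
have h1 := IH (filter (fun p => p <= 2 ^ J)%N s) (filter_uniq _ hu) (all_filter_sub _ _ _ hp).
have h1' := h1 (filter_all _ _).
set s2 := filter (predC (fun p => p <= 2 ^ J)%N) s.
have hb2 : all (fun p => 2 ^ J < p <= (2 ^ J).*2)%N s2.
  apply/allP => p; rewrite mem_filter => /andP [h3 h4] /=.
  rewrite /= -ltnNge in h3. rewrite h3 /= -muln2 -expnSr. exact: (allP hb p h4).
have hm : 1 <= INR (2 ^ J)%N by apply: (le_INR 1); apply/leP; rewrite expn_gt0.
have h2 : sumL (fun p => ln (INR p) / INR p) s2 <= 2 * ln 2.
  apply: (Rle_trans _ (sumL (fun p => / INR (2 ^ J)%N * ln (INR p)) s2)).
    apply: sumL_le => p hps. have := allP hb2 p hps => /andP [hlt _].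
    have hlt' : INR (2 ^ J)%N < INR p by apply: lt_INR; apply/ltP.
    have lp : 0 <= ln (INR p) by apply: ln_nonneg'; lra.
    rewrite /Rdiv Rmult_comm. apply: Rmult_le_compat_r => //.
    left; apply: Rinv_lt_contravar; [apply: Rmult_lt_0_compat; lra | exact hlt'].
  rewrite sumL_scal.
  have := block_ln (2 ^ J)%N s2 (filter_uniq _ hu) (all_filter_sub _ _ _ hp) hb2.
  move=> hh. apply: (Rle_trans _ (/ INR (2 ^ J)%N * (INR (2 ^ J)%N * (2 * ln 2)))).
    apply: Rmult_le_compat_l => //; left; apply: Rinv_0_lt_compat; lra.
  right; field; lra.
rewrite S_INR. lra.
Qed.

Definition Pz (N : nat) (z : R) : seq nat :=
  filter (fun p => prime p && Rleb (INR p) z) (iota 0 N.+1).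

Lemma Pz_uniq N z : uniq (Pz N z).
Proof. exact: filter_uniq (iota_uniq _ _). Qed.

Lemma Pz_prime N z : all prime (Pz N z).
Proof. apply/allP => p; rewrite mem_filter => /andP [/andP [h _] _]; exact h. Qed.

Lemma RlebP' x y : reflect (x <= y) (Rleb x y).
Proof. rewrite /Rleb; case: Rle_dec => h; constructor; done. Qed.

Lemma RltbP' x y : reflect (x < y) (Rltb x y).
Proof. rewrite /Rltb; case: Rlt_dec => h; constructor; done. Qed.

Lemma smooth_eq N z n : (0 < n)%N -> (n <= N)%N ->
  smooth_part z n = \prod_(p <- Pz N z) p ^ logn p n.
Proof.
move=> n0 nN. rewrite /smooth_part /Pz big_filter.
have e1 : \prod_(p <- iota 0 N.+1 | prime p && Rleb (INR p) z) p ^ logn p n =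
          \prod_(p <- iota 0 N.+1 | (p \in primes n) && Rleb (INR p) z) p ^ logn p n.
  rewrite big_mkcond [RHS]big_mkcond. apply: eq_bigr => p _.
  case: (boolP (p \in primes n)) => hp.
  - have pp : prime p by move: hp; rewrite mem_primes => /andP [].
    by rewrite pp.
  - have -> : logn p n = 0%N by apply/eqP; rewrite -leqn0 leqNgt logn_gt0.
    by rewrite expn0 /=; case: (_ && _).
rewrite e1 -big_filter_cond.
apply: perm_big. apply: uniq_perm.
- exact: primes_uniq.
- exact: filter_uniq (iota_uniq _ _).
- move=> p. rewrite mem_filter mem_iota add0n.
  case: (boolP (p \in primes n)) => hp //=.
  have : p %| n by move: hp; rewrite mem_primes => /and3P [].
  move/(dvdn_leq n0) => h. by rewrite ltnS (leq_trans h nN).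
Qed.

Lemma Rpower_pos x y : 0 < Rpower x y.
Proof. rewrite /Rpower; exact: exp_pos. Qed.

Lemma Rpower_prod sg P n : all prime P ->
  Rpower (INR (\prod_(p <- P) p ^ logn p n)) sg = gP sg P n.
Proof.
elim: P => [|p P IH].
  by move=> _; rewrite big_nil /gP prodL_nil /= /Rpower ln_1 Rmult_0_r exp_0.
move=> /= /andP [pp hP]. rewrite big_cons /gP prodL_cons -/(gP sg P n) -IH //.
have hp : 0 < INR p by apply: (lt_INR 0); apply/ltP; exact: prime_gt0.
have hq : 0 < INR (\prod_(q <- P) q ^ logn q n).
  apply: (lt_INR 0); apply/ltP. move: hP {IH}; elim: P => [|r P' IHP]; first by rewrite big_nil.
  move=> /= /andP [pr hP']. by rewrite big_cons muln_gt0 expn_gt0 prime_gt0 // IHP.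
rewrite mult_INR -Rpower_mult_distr; last done.
- rewrite INR_expn. congr (_ * _). rewrite -Rpower_pow // Rpower_mult Rmult_comm -Rpower_mult Rpower_pow //. exact: Rpower_pos.
- by rewrite INR_expn; apply: pow_lt.
Qed.

Lemma Rpower_le_base x y s : 0 < x -> x <= y -> 0 <= s -> Rpower x s <= Rpower y s.
Proof. move=> hx hxy hs. rewrite /Rpower. apply: exp_le'. apply: Rmult_le_compat_l => //.
exact: ln_le'. Qed.

Lemma rankin N z sg Y : 0 < sg -> sg < 1 -> 0 < Y ->
  INR (count (fun n => Rleb Y (INR (smooth_part z n))) (iota 1 N)) <=
  INR N * cP sg (Pz N z) / Rpower Y sg.
Proof.
move=> s0 s1 Y0. rewrite sumL_count.
have hY := Rpower_pos Y sg.
apply: (Rle_trans _ (sumL (fun n => / Rpower Y sg * gP sg (Pz N z) n) (iota 1 N))).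
  apply: sumL_le => n; rewrite mem_iota => /andP [n1 nN].
  rewrite add1n ltnS in nN.
  rewrite -Rpower_prod; last exact: Pz_prime. rewrite -smooth_eq //.
  have hs := Rpower_pos (INR (smooth_part z n)) sg.
  case: (RlebP' Y (INR (smooth_part z n))) => h.
  - have := Rpower_le_base _ _ sg Y0 h (Rlt_le _ _ s0) => h2.
    apply: (Rmult_le_reg_l (Rpower Y sg)) => //.
    rewrite -Rmult_assoc Rinv_r; lra.
  - apply: Rmult_le_pos; [left; exact: Rinv_0_lt_compat | lra].
rewrite sumL_scal. have := euler sg s0 s1 (Pz N z) (Pz_uniq N z) (Pz_prime N z) N.
move=> h. rewrite /Rdiv Rmult_comm. apply: Rmult_le_compat_r => //.
left; exact: Rinv_0_lt_compat.
Qed.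

Lemma hh_bound sg z a0 p : 0 < sg -> sg <= /2 -> 1 < z -> sg * ln z <= a0 ->
  prime p -> INR p <= z -> hh sg p <= 4 * sg * exp a0 * (ln (INR p) / INR p).
Proof.
move=> s0 s1 z1 ha pp pz.
have p2 := INR_prime_ge2 pp.
have lp : 0 <= ln (INR p) by apply: ln_nonneg'; lra.
set x := sg * ln (INR p).
have x0 : 0 <= x by apply: Rmult_le_pos; lra.
have ht : tt sg p = exp x by rewrite /tt /Rpower /x.
have hxa : x <= a0.
  apply: (Rle_trans _ (sg * ln z)) => //. apply: Rmult_le_compat_l; first lra.
  apply: ln_le'; lra.
have t1 : exp x - 1 <= x * exp x.
  have := exp_ineq1_le (- x). have e : exp x * exp (- x) = 1 by rewrite -exp_plus Rplus_opp_r exp_0.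
  have ex := exp_pos x. nra.
have tea : exp x <= exp a0 := exp_le' _ _ hxa.
have tsq : tt sg p <= sqrt (INR p).
  rewrite -Rpower_sqrt; last lra. apply: Rle_Rpower; lra.
have sq : 4 / 3 <= sqrt (INR p).
  have hs := sqrt_sqrt (INR p) ltac:(lra). have := sqrt_pos (INR p). nra.
have hs := sqrt_sqrt (INR p) ltac:(lra).
have hpt : INR p / 4 <= INR p - tt sg p by nra.
rewrite /hh ht. rewrite ht in hpt.
have ex1 : 1 <= exp x by have := exp_ineq1_le x; lra.
apply: (Rle_trans _ ((exp x - 1) / (INR p / 4))).
  apply: Rmult_le_compat_l; first lra. apply: Rinv_le_contravar; lra.
have -> : 4 * sg * exp a0 * (ln (INR p) / INR p) = (x * exp a0) / (INR p / 4).
  rewrite /x; field; lra.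
apply: Rmult_le_compat_r; first by left; apply: Rinv_0_lt_compat; lra.
apply: (Rle_trans _ _ _ t1). apply: Rmult_le_compat_l; lra.
Qed.

Lemma omega_diff z n : INR (omega n) - INR (omega_le z n) =
  INR (size (filter (predC (fun p => Rleb (INR p) z)) (primes n))).
Proof.
rewrite /omega /omega_le !size_filter -(count_predC (fun p => Rleb (INR p) z) (primes n)).
rewrite plus_INR; lra.
Qed.

Lemma big_primes n z : (0 < n)%N -> 1 < z ->
  INR (size (filter (predC (fun p => Rleb (INR p) z)) (primes n))) * ln z <= ln (INR n).
Proof.
move=> n0 z1. set s := filter _ _.
have hu : uniq s by apply: filter_uniq; exact: primes_uniq.
have hp : all prime s.
  apply/allP => p; rewrite mem_filter mem_primes => /andP [_ /and3P [pp _ _]]; exact pp.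
have hd : all (fun p => p %| n) s.
  apply/allP => p; rewrite mem_filter mem_primes => /andP [_ /and3P [_ _ h]]; exact h.
have hdiv := prodN_dvd s n hu hp hd.
have hle := dvdn_leq n0 hdiv.
have p0 : 0 < INR (prodN s) by apply: (lt_INR 0); apply/ltP; exact: prodN_gt0.
apply: (Rle_trans _ (ln (INR (prodN s)))); last by apply: ln_le' => //; apply: le_INR; apply/leP.
rewrite -sumL_ln // -sumL_const.
apply: sumL_le => p; rewrite mem_filter => /andP [h _].
move: h => /= /RlebP' h. apply: ln_le'; lra.
Qed.

Lemma exJ x : 0 <= x -> exists J : nat, x <= INR J <= x + 1.
Proof.
move=> hx. have [h1 h2] := archimed x.
exists (Z.to_nat (up x)). rewrite INR_IZR_INZ Z2Nat.id; first lra.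
apply: le_IZR. lra.
Qed.

Lemma ln2_lt1 : ln 2 < 1.
Proof. have := exp_ineq1 1 ltac:(lra). move=> h.
rewrite -(ln_exp 1). apply: ln_increasing; lra. Qed.

Lemma ln2_pos : 0 < ln 2.
Proof. apply: ln_pos'; lra. Qed.

Lemma sum_lnp_bound N z : 1 < z ->
  sumL (fun p => ln (INR p) / INR p) (Pz N z) <= 2 * ln z + 2 * ln 2.
Proof.
move=> z1. have lz0 : 0 < ln z by apply: ln_pos'.
have l2 := ln2_pos.
have [J [hJ1 hJ2]] := exJ (ln z / ln 2) ltac:(apply: Rmult_le_pos; [lra| left; apply: Rinv_0_lt_compat; lra]).
have h2J : z <= INR (2 ^ J)%N.
  have e2 : INR 2 = 2 by rewrite /=; lra.
  rewrite INR_expn e2 -Rpower_pow; last lra. rewrite /Rpower -{1}(exp_ln z); last lra.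
  apply: exp_le'. have e : ln z = ln z / ln 2 * ln 2 by field; lra.
  rewrite {1}e. apply: Rmult_le_compat_r; lra.
apply: (Rle_trans _ (INR J * (2 * ln 2))).
  apply: dyadic; [exact: Pz_uniq | exact: Pz_prime|].
  apply/allP => p; rewrite mem_filter => /andP [/andP [_ /RlebP' hp] _].
  apply/leP; apply: INR_le; lra.
have e : (ln z / ln 2 + 1) * (2 * ln 2) = 2 * ln z + 2 * ln 2 by field; lra.
rewrite -e. apply: Rmult_le_compat_r; lra.
Qed.

Theorem lemma5p1 :
  forall A eps : R, 0 < A -> 0 < eps ->
  exists C : R, 0 < C /\
  exists N0 : nat, forall N : nat, (N0 <= N)%nat ->
  exists z : R,
    (1 - eps) * ln (ln (INR N)) < ln (ln z) /\
    z < Rpower (INR N) eps /\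
    INR (count (fun n => ~~ good N eps z n) (iota 1 N))
       <= C * INR N * Rpower (ln (INR N)) (- A).
Proof.
move=> A eps hA he.
have he2 : 0 < eps * eps by nra.
pose a0 := 4 * A / (eps * eps).
have a0p : 0 < a0 by rewrite /a0; apply: Rmult_lt_0_compat; [lra| apply: Rinv_0_lt_compat; lra].
pose L0 := 48 * exp a0 / (eps * eps) + 8 * eps + 4 * eps * (1 + a0) + 2 / (eps * eps) + 1.
have hL0 : 48 * exp a0 / (eps * eps) >= 0 /\ 2 / (eps * eps) >= 0.
  split; apply: Rle_ge; apply: Rmult_le_pos; try (left; apply: Rinv_0_lt_compat; lra).
  - have ? := exp_pos a0; lra.
  - lra.
have hL0' : 0 <= 4 * eps * (1 + a0) by nra.
exists 1; split; first lra.
have [N0 hN0] := INR_unbounded (exp (exp L0)).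
exists N0 => N hN.
have hNr : exp (exp L0) < INR N.
  apply: (Rlt_le_trans _ _ _ hN0). apply: le_INR; apply/leP; exact hN.
pose lN := ln (INR N).
have N1 : 1 < INR N.
  have h1 := exp_pos L0. have h2 := exp_ineq1_le (exp L0). lra.
have lNg : exp L0 < lN by rewrite /lN -(ln_exp (exp L0)); apply: ln_increasing => //; apply: exp_pos.
pose L := ln lN.
have lNp : 0 < lN by have := exp_pos L0; lra.
have Lg : L0 < L by rewrite /L -(ln_exp L0); apply: ln_increasing => //; apply: exp_pos.
have eL : exp L = lN by rewrite /L exp_ln.
have Lp : 1 < L by rewrite /L0 in Lg; have [? ?] := hL0; have ? := hL0'; lra.
pose K := eps * L / 2.
have Kp : 0 < K by rewrite /K; nra.
pose lz := lN / K.
pose z := exp lz.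
exists z.
have lzp : 0 < lz by rewrite /lz; apply: Rmult_lt_0_compat => //; apply: Rinv_0_lt_compat.
have lnz : ln z = lz by rewrite /z ln_exp.
have lnlz : ln lz = L - ln K.
  rewrite /lz /Rdiv ln_mult //; last by apply: Rinv_0_lt_compat.
  rewrite ln_Rinv //.
have lnK1 : ln K < eps * L.
  have h := ln_le_sub1 K Kp. rewrite /K in h *. nra.
have sK := sqrt_sqrt K (Rlt_le _ _ Kp).
have sK0 := sqrt_pos K.
have sKlt : sqrt K < L / 4.
  have h8 : 8 * eps < L by rewrite /L0 in Lg; have ? := exp_pos a0; have [? ?] := hL0; have ? := hL0'; lra.
  apply: Rnot_le_lt => h. have : L / 4 * (L / 4) <= sqrt K * sqrt K.
    apply: Rmult_le_compat; lra.
  rewrite sK /K. nra.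
have lnK2 : ln K < L / 2.
  have e : ln K = 2 * ln (sqrt K).
    rewrite -{1}sK ln_mult; [lra| |]; apply: sqrt_lt_R0; lra.
  have : 0 < sqrt K by apply: sqrt_lt_R0.
  move=> h. have := ln_le_sub1 (sqrt K) h. lra.
have lzL : L / (2 * eps) <= lz.
  have hexp : L * L / 4 <= lN.
    rewrite -eL. have e : exp L = exp (L / 2) * exp (L / 2) by rewrite -exp_plus; congr exp; field.
    rewrite e. have := exp_ineq1_le (L / 2). nra.
  rewrite /lz /K. apply: (Rmult_le_reg_r (eps * L / 2)); first nra.
  have -> : lN / (eps * L / 2) * (eps * L / 2) = lN by field; lra.
  have -> : L / (2 * eps) * (eps * L / 2) = L * L / 4 by field; lra.
  exact hexp.
have lz2 : 2 * (1 + a0) <= lz.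
  apply: (Rle_trans _ (L / (2 * eps))) => //.
  have h4 : 4 * eps * (1 + a0) < L by rewrite /L0 in Lg; have ? := exp_pos a0; have [? ?] := hL0; have ? := hL0'; lra.
  apply: (Rmult_le_reg_r (2 * eps)); first lra.
  have -> : L / (2 * eps) * (2 * eps) = L by field; lra.
  nra.
have z1 : 1 < z by rewrite /z; have := exp_ineq1_le lz; lra.
split.
  rewrite lnz lnlz -/lN -/L. nra.
split.
  rewrite /z /Rpower. apply: exp_increasing. rewrite -/lN.
  have h2 : 2 / (eps * eps) < L by rewrite /L0 in Lg; have ? := exp_pos a0; have [? ?] := hL0; have ? := hL0'; lra.
  have heK : 1 < eps * K.
    rewrite /K. apply: (Rmult_lt_reg_l (2 / (eps * eps))).
      apply: Rmult_lt_0_compat; [lra| apply: Rinv_0_lt_compat; lra].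
    have -> : 2 / (eps * eps) * (eps * (eps * L / 2)) = L by field; lra.
    lra.
  rewrite /lz. apply: (Rmult_lt_reg_r K) => //.
  have -> : lN / K * K = lN by field; lra.
  nra.
pose Y := Rpower (INR N) eps.
have Yp : 0 < Y := Rpower_pos _ _.
pose sg := a0 / lz.
have sgp : 0 < sg by rewrite /sg; apply: Rmult_lt_0_compat => //; apply: Rinv_0_lt_compat.
have sglz : sg * lz = a0 by rewrite /sg; field; lra.
have sg2 : sg * 2 <= a0.
  rewrite -sglz. apply: Rmult_le_compat_l; lra.
have sgh : sg <= / 2.
  apply: (Rmult_le_reg_r lz) => //. rewrite sglz. lra.
have lNK : lN = K * lz by rewrite /lz; field; lra.
have stepA : INR (count (fun n => ~~ good N eps z n) (iota 1 N)) <=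
             INR (count (fun n => Rleb Y (INR (smooth_part z n))) (iota 1 N)).
  rewrite !sumL_count. apply: sumL_le => n; rewrite mem_iota => /andP [n1 nN].
  rewrite add1n ltnS in nN.
  have h2 : Rltb (INR (omega n) - INR (omega_le z n)) (eps * ln (ln z)) = true.
    apply/RltbP'. rewrite omega_diff.
    have hb := big_primes n z n1 z1.
    have hn : ln (INR n) <= lN.
      apply: ln_le'; [apply: (lt_INR 0); apply/ltP; exact n1| apply: le_INR; apply/leP; exact nN].
    set k := INR _ in hb *.
    have hk : k <= K.
      apply: (Rmult_le_reg_r lz) => //. rewrite -lnz. rewrite lnz -lNK in hb *. lra.
    rewrite lnz lnlz. have eK : K = eps * L / 2 by []. have hp := Rmult_lt_0_compat eps (L / 2 - ln K) he ltac:(lra). nra.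
  rewrite /good h2 andbT.
  case: (RltbP' (INR (smooth_part z n)) Y) => h /=.
  - case: (Rleb _ _); lra.
  - have -> : Rleb Y (INR (smooth_part z n)) = true by apply/RlebP'; lra.
    lra.
apply: (Rle_trans _ _ _ stepA).
have sg1 : sg < 1 by lra.
apply: (Rle_trans _ _ _ (rankin N z sg Y sgp sg1 Yp)).
have stepC : cP sg (Pz N z) <= exp (12 * a0 * exp a0).
  have hh0 : forall p, p \in Pz N z -> 0 <= hh sg p.
    move=> p; rewrite mem_filter => /andP [/andP [pp _] _]; exact: hh_ge0.
  apply: (Rle_trans _ _ _ (prodL_exp (hh sg) (Pz N z) hh0)).
  apply: exp_le'.
  apply: (Rle_trans _ (sumL (fun p => 4 * sg * exp a0 * (ln (INR p) / INR p)) (Pz N z))).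
    apply: sumL_le => p; rewrite mem_filter => /andP [/andP [pp /RlebP' hp] _].
    apply: (hh_bound sg z a0 p) => //. rewrite lnz sglz; lra.
  rewrite sumL_scal.
  have hs := sum_lnp_bound N z z1. rewrite lnz in hs.
  have ea := exp_pos a0.
  have hs2 : 0 <= sumL (fun p => ln (INR p) / INR p) (Pz N z).
    apply: sumL_ge0 => p; rewrite mem_filter => /andP [/andP [pp _] _].
    have := INR_prime_ge2 pp => hp2. apply: Rmult_le_pos.
    - apply: ln_nonneg'; lra.
    - left; apply: Rinv_0_lt_compat; lra.
  have l2 := ln2_lt1. have l2p := ln2_pos.
  apply: (Rle_trans _ (4 * sg * exp a0 * (2 * lz + 2 * ln 2))).
    apply: Rmult_le_compat_l => //. nra.
  have : sg * (2 * lz + 2 * ln 2) <= 3 * a0 by nra.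
  nra.
have stepD : Rpower Y sg = exp (2 * A * L).
  rewrite /Rpower /Y ln_Rpower -/lN. congr exp. rewrite /sg /a0 /K lNK /K. field. split; lra.
rewrite stepD.
have hpow : Rpower (ln (INR N)) (- A) = exp (- A * L) by rewrite /Rpower.
rewrite hpow Rmult_1_l.
have hN0' : 0 <= INR N by lra.
rewrite /Rdiv Rmult_assoc. apply: Rmult_le_compat_l => //.
rewrite -exp_Ropp.
apply: (Rle_trans _ (exp (12 * a0 * exp a0) * exp (- (2 * A * L)))).
  apply: Rmult_le_compat_r; [left; exact: exp_pos | exact stepC].
rewrite -exp_plus. apply: exp_le'.
have h48 : 48 * exp a0 / (eps * eps) <= L by rewrite /L0 in Lg; have [? ?] := hL0; have ? := hL0'; lra.
have : 12 * a0 * exp a0 = A * (48 * exp a0 / (eps * eps)) by rewrite /a0; field; lra.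
move=> e; rewrite e. nra.
Qed.
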